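(* Let $X$ be a topological space and $(Y,d)$ a metric space. Then the family $$\mathcal{B}=\{B_K(f,\epsilon): f\in C_{od}^\star(X,Y),\ K \text{ a nonempty compact subset of } \mathrm{dom}(f),\ \epsilon>0\}\cup\{C_{od}(X,Y)\}$$ is a basis for a topology on $C_{od}(X,Y)$.
   Context: $C_{od}(X,Y)$ is the set of continuous functions $f:\mathrm{dom}(f)\to Y$ whose domain $\mathrm{dom}(f)$ is an open subset of $X$ (including the empty function $\emptyset$), and $C_{od}^\star(X,Y)=C_{od}(X,Y)\setminus\{\emptyset\}$. For $f,g$ and a nonempty compact $K\subseteq\mathrm{dom}(f)\cap\mathrm{dom}(g)$, $d_K(f,g)=\sup_{x\in K}d(f(x),g(x))$. For $f\in C_{od}^\star(X,Y)$, $K$ a nonempty compact subset of $\mathrm{dom}(f)$ and $\epsilon>0$, $B_K(f,\epsilon)=\{g\in C_{od}^\star(X,Y): K\subseteq\mathrm{dom}(g)\text{ and } d_K(f,g)<\epsilon\}$. *)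

(* Defs.v *)
From HB Require Import structures.
From mathcomp Require Import all_boot all_order all_algebra.
From mathcomp Require Import all_classical all_reals topology.
Set Implicit Arguments. Unset Strict Implicit. Unset Printing Implicit Defensive.
Import Order.TTheory GRing.Theory Num.Theory.
Local Open Scope classical_set_scope.
Local Open Scope ring_scope.

(* A partial function X -> Y is encoded as f : X -> option Y;
   its domain is the set of points where it is defined. *)
Definition pdom (X Y : Type) (f : X -> option Y) : set X :=
  [set x | exists y, f x = Some y].

Definition is_metric (R : realType) (Y : Type) (d : Y -> Y -> R) : Prop :=
  [/\ forall a b, 0 <= d a b,
      forall a b, d a b = 0 <-> a = b,
      forall a b, d a b = d b a &
      forall a b c, d a c <= d a b + d b c].

Definition is_cod (R : realType) (X : topologicalType) (Y : Type)
    (d : Y -> Y -> R) (f : X -> option Y) : Prop :=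
  open (pdom f) /\
  forall x y, f x = Some y -> forall e : R, 0 < e ->
    \forall z \near x, exists2 w, f z = Some w & d y w < e.

Definition Cod (R : realType) (X : topologicalType) (Y : Type)
    (d : Y -> Y -> R) : set (X -> option Y) := [set f | is_cod d f].

Definition Cod_star (R : realType) (X : topologicalType) (Y : Type)
    (d : Y -> Y -> R) : set (X -> option Y) :=
  [set f | is_cod d f /\ (pdom f !=set0)].

Definition dK (R : realType) (X : topologicalType) (Y : Type)
    (d : Y -> Y -> R) (K : set X) (f g : X -> option Y) : R :=
  sup [set r : R | exists x, exists a, exists b,
         [/\ K x, f x = Some a, g x = Some b & r = d a b]].

Definition BK (R : realType) (X : topologicalType) (Y : Type)
    (d : Y -> Y -> R) (f : X -> option Y) (K : set X) (e : R)
    : set (X -> option Y) :=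
  [set g | Cod_star d g /\ K `<=` pdom g /\ dK d K f g < e].

Definition Bfam (R : realType) (X : topologicalType) (Y : Type)
    (d : Y -> Y -> R) : set (set (X -> option Y)) :=
  [set B | exists f K e, [/\ Cod_star d f, (K !=set0) /\ compact K,
                             K `<=` pdom f, 0 < e & B = BK d f K e]]
  `|` [set Cod d].

Definition is_basis_on (T : Type) (U : set T) (B : set (set T)) : Prop :=
  [/\ forall b, B b -> b `<=` U,
      (forall u, U u -> exists2 b, B b & b u) &
      forall b1 b2 u, B b1 -> B b2 -> b1 u -> b2 u ->
        exists2 b3, B b3 & b3 u /\ b3 `<=` b1 `&` b2].

(* Main.v *)
Require Import Defs.
From mathcomp Require Import all_boot all_order all_algebra.
From mathcomp Require Import all_classical all_reals topology.
Local Open Scope classical_set_scope.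
Local Open Scope ring_scope.
Import Order.TTheory GRing.Theory Num.Theory.
From mathcomp Require Import lra.

Section Aux.
Variables (R : realType) (X : topologicalType) (Y : Type) (d : Y -> Y -> R).
Hypothesis hd : is_metric d.

Definition Sset (K : set X) (f g : X -> option Y) : set R :=
  [set r : R | exists x, exists a, exists b,
         [/\ K x, f x = Some a, g x = Some b & r = d a b]].

Lemma dKE K f g : dK d K f g = sup (Sset K f g).
Proof. by []. Qed.

Lemma bnd (K : set X) f g : is_cod d f -> is_cod d g -> compact K ->
  K `<=` pdom f -> K `<=` pdom g -> has_ubound (Sset K f g).
Proof.
case: hd => d0 deq dsym dtri.
move=> [_ cf] [_ cg] /compact_near_coveringP cK Kf Kg.
suff : \forall n \near \oo, K `<=` (fun z => forall a b, f z = Some a -> g z = Some b -> d a b < n%:R).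
  move=> [N _ HN]; exists N%:R => r [x [a [b [Kx fa gb ->]]]].
  by apply/ltW; apply: (HN N (leqnn N) x Kx).
apply: (cK nat \oo (fun n z => forall a b, f z = Some a -> g z = Some b -> d a b < n%:R)).
move=> x Kx.
have [a0 fa0] := Kf x Kx; have [b0 gb0] := Kg x Kx.
have Hf := cf x a0 fa0 1 ltr01; have Hg := cg x b0 gb0 1 ltr01.
have M0 : 0 <= d a0 b0 + 2 by have := d0 a0 b0; lra.
have HN := archi_boundP M0.
set N := Num.Def.archi_bound _ in HN.
near=> z n.
move=> a b fa gb.
have [w fw dw] : exists2 w, f z = Some w & d a0 w < 1 by near: z.
have [w' gw dw'] : exists2 w, g z = Some w & d b0 w < 1 by near: z.
move: fa gb; rewrite fw gw => -[<-] [<-].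
have Nn : (N <= n)%N by near: n; exists N.
have : N%:R <= n%:R :> R by rewrite ler_nat.
have := dtri w a0 w'; have := dtri a0 b0 w'; rewrite (dsym w a0).
lra.
Unshelve. all: by end_near.
Qed.

Lemma dK_tri (K1 K : set X) (f u g : X -> option Y) : K1 `<=` K -> K1 !=set0 -> K1 `<=` pdom f ->
  K `<=` pdom u -> K `<=` pdom g -> has_ubound (Sset K1 f u) ->
  has_ubound (Sset K u g) -> dK d K1 f g <= dK d K1 f u + dK d K u g.
Proof.
case: hd => d0 deq dsym dtri.
move=> sK [x K1x] K1f Ku Kg b1 b2; rewrite !dKE; apply: ge_sup.
  have [a fa] := K1f x K1x; have [b gb] := Kg x (sK x K1x).
  by exists (d a b), x, a, b.
move=> r [y [a [b [K1y fa gb ->]]]].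
have [c uc] := Ku y (sK y K1y).
apply: (le_trans (dtri a c b)); apply: lerD.
  by apply: ub_le_sup => //; exists y, a, c.
by apply: ub_le_sup => //; exists y, c, b; split => //; apply: sK.
Qed.

Lemma dK_self (K : set X) (u : X -> option Y) : K !=set0 -> K `<=` pdom u -> dK d K u u <= 0.
Proof.
case: hd => d0 deq dsym dtri.
move=> [x Kx] Ku; rewrite dKE; apply: ge_sup.
  have [a ua] := Ku x Kx; by exists (d a a), x, a, a.
move=> r [y [a [b [Ky ua ub ->]]]].
move: ua; rewrite ub => -[->]; by rewrite (proj2 (deq _ _) erefl).
Qed.

End Aux.

Theorem mainTheorem4 (R : realType) (X : topologicalType) (Y : Type)
    (d : Y -> Y -> R) (hd : is_metric d) :
  is_basis_on (@Cod R X Y d) (@Bfam R X Y d).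
Proof.
split.
- move=> b [[f [K [e [Hf _ _ _ ->]]]] | ->] g //.
  by move=> [[Hg _] _].
- move=> u Hu; exists (Cod d) => //; by right.
- move=> b1 b2 u [[f1 [K1 [e1 [Hf1 [K1n cK1] K1f1 e1p ->]]]] | ->]
    [[f2 [K2 [e2 [Hf2 [K2n cK2] K2f2 e2p ->]]]] | ->] Hu1 Hu2.
  + set m1 := e1 - dK d K1 f1 u; set m2 := e2 - dK d K2 f2 u.
    set e := Num.min m1 m2.
    have [[Hu1c _] [K1u d1]] := Hu1; have [_ [K2u d2]] := Hu2.
    have em1 : e <= m1 by rewrite /e ge_min lexx.
    have em2 : e <= m2 by rewrite /e ge_min lexx orbT.
    have ep : 0 < e by rewrite /e lt_min /m1 /m2 !subr_gt0 d1 d2.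
    have Ku : K1 `|` K2 `<=` pdom u by move=> x [/K1u|/K2u].
    have cK : compact (K1 `|` K2) by apply: compactU.
    have Kn : K1 `|` K2 !=set0 by case: K1n => x ?; exists x; left.
    exists (BK d u (K1 `|` K2) e).
      left; exists u, (K1 `|` K2), e; split => //; exact: Hu1.1.
    split.
      split; first exact: Hu1.1.
      split => //; exact: le_lt_trans (dK_self _ _ _ _ hd _ _ Kn Ku) ep.
    move=> g [Hg [HKg Hdg]].
    have bug := bnd _ _ _ _ hd _ _ _ Hu1c Hg.1 cK Ku HKg.
    split.
    * split => //; split; first by move=> x K1x; apply: HKg; left.
      have := dK_tri _ _ _ _ hd _ _ _ _ _ (fun x (h : K1 x) => or_introl h) K1n K1f1 Ku HKg
        (bnd _ _ _ _ hd _ _ _ Hf1.1 Hu1c cK1 K1f1 K1u) bug.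
      move=> H; apply: (le_lt_trans H); rewrite -ltrBrDl; exact: lt_le_trans Hdg em1.
    * split => //; split; first by move=> x K2x; apply: HKg; right.
      have := dK_tri _ _ _ _ hd _ _ _ _ _ (fun x (h : K2 x) => or_intror h) K2n K2f2 Ku HKg
        (bnd _ _ _ _ hd _ _ _ Hf2.1 Hu2.1.1 cK2 K2f2 K2u) bug.
      move=> H; apply: (le_lt_trans H); rewrite -ltrBrDl; exact: lt_le_trans Hdg em2.
  + exists (BK d f1 K1 e1).
      by left; exists f1, K1, e1.
    by split => // g Hg; split => //; exact: Hg.1.1.
  + exists (BK d f2 K2 e2).
      by left; exists f2, K2, e2.
    by split => // g Hg; split => //; exact: Hg.1.1.
  + exists (Cod d); first by right.
    by split.
Qed.
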